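(* Let $\mathsf{T}$ be a quantifier-free set theory extending $\mathsf{MLS}$ (its literals include all $\mathsf{MLS}$ literals, in particular membership literals $x\in y$ between set variables). Suppose $\mathsf{T}$ contains a conjunction of literals $\varphi$ with a designated variable $\bar x$ such that, for some integer $k\ge2$: every set assignment satisfying $\varphi$ assigns to $\bar x$ a set of cardinality at most $k$, and some set assignment satisfying $\varphi$ assigns to $\bar x$ a set of cardinality exactly $k$. Then $\mathsf{T}$ is not convex.
   Context: $\mathsf{MLS}$ is the quantifier-free propositional closure of atoms $x=\varnothing$, $x=y$, $x\subseteq y$, $x\in y$, $x=y\setminus z$, $x=y\cup z$, $x=y\cap z$ over set variables, interpreted by set assignments, i.e. maps from finitely many set variables into the von Neumann universe, with the usual meaning of the symbols. A theory of this kind is convex if for every conjunction of its literals $\psi$ and every finite nonempty set $\mathcal{E}$ of equalities between variables, whenever every set assignment satisfying $\psi$ satisfies $\bigvee\mathcal{E}$, there is some $x=y$ in $\mathcal{E}$ satisfied by every set assignment satisfying $\psi$. *)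

(* Defs.v *)
From Stdlib Require Import List Arith.
Import ListNotations.

Set Implicit Arguments.

(* A set assignment is modelled as a
   total map from variables into a universe [U] of sets with membership
   [mem]; satisfaction of a literal only depends on the variables occurring
   in it (locality), so this is equivalent to finitely-supported assignments. *)
Definition var := nat.

Inductive mls_atom :=
| AEmpty (x : var)
| AEq (x y : var)
| ASub (x y : var)
| AIn (x y : var)
| ADiff (x y z : var)
| AUnion (x y z : var)
| AInter (x y z : var).

Section Semantics.
Variables (U : Type) (mem : U -> U -> Prop).

Definition mls_atom_sat (s : var -> U) (a : mls_atom) : Prop :=
  match a with
  | AEmpty x => forall w, ~ mem w (s x)
  | AEq x y => s x = s y
  | ASub x y => forall w, mem w (s x) -> mem w (s y)
  | AIn x y => mem (s x) (s y)
  | ADiff x y z => forall w, mem w (s x) <-> (mem w (s y) /\ ~ mem w (s z))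
  | AUnion x y z => forall w, mem w (s x) <-> (mem w (s y) \/ mem w (s z))
  | AInter x y z => forall w, mem w (s x) <-> (mem w (s y) /\ mem w (s z))
  end.

Definition mls_lit := (bool * mls_atom)%type.

Definition mls_lit_sat (s : var -> U) (l : mls_lit) : Prop :=
  if fst l then mls_atom_sat s (snd l) else ~ mls_atom_sat s (snd l).

Record qf_theory := QFTheory {
  tlit : Type;
  tvars : tlit -> list var;
  tsat : (var -> U) -> tlit -> Prop;
  tsat_local : forall s s' l,
      (forall v, In v (tvars l) -> s v = s' v) -> (tsat s l <-> tsat s' l);
  tmls : mls_lit -> tlit;
  tmls_sat : forall s l, tsat s (tmls l) <-> mls_lit_sat s l
}.

Definition sat_conj (T : qf_theory) (s : var -> U) (psi : list (tlit T)) : Prop :=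
  forall l, In l psi -> tsat T s l.

Definition convex (T : qf_theory) : Prop :=
  forall (psi : list (tlit T)) (E : list (var * var)),
    E <> [] ->
    (forall s, sat_conj T s psi -> exists e, In e E /\ s (fst e) = s (snd e)) ->
    exists e, In e E /\ (forall s, sat_conj T s psi -> s (fst e) = s (snd e)).

Definition card_le (a : U) (k : nat) : Prop :=
  exists l : list U, length l <= k /\ forall y, mem y a -> In y l.

Definition card_eq (a : U) (k : nat) : Prop :=
  exists l : list U, length l = k /\ NoDup l /\ forall y, mem y a <-> In y l.

End Semantics.

(* Main.v *)
Require Import Defs.
From Stdlib Require Import List Arith Lia Classical.
Import ListNotations.

Lemma in_max (v : nat) (l : list nat) : In v l -> v <= list_max l.
Proof.
  intro H. assert (Hf := proj1 (list_max_le l (list_max l)) (le_n _)).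
  rewrite Forall_forall in Hf. auto.
Qed.

Theorem lemma13 (U : Type) (mem : U -> U -> Prop) (T : qf_theory mem)
    (phi : list (tlit T)) (xbar : var) (k : nat) :
  2 <= k ->
  (forall s, sat_conj T s phi -> card_le mem (s xbar) k) ->
  (exists s, sat_conj T s phi /\ card_eq mem (s xbar) k) ->
  ~ convex T.
Proof.
  intros Hk Hle [s0 [Hs0 [l0 [Hlen [Hnd Hmem]]]]] Hconv.
  set (N := S (xbar + list_max (flat_map (tvars T) phi))).
  assert (HN : forall l v, In l phi -> In v (tvars T l) -> v < N).
  { intros l v Hl Hv. unfold N.
    assert (v <= list_max (flat_map (tvars T) phi)).
    { apply in_max. apply in_flat_map. eauto. }
    lia. }
  assert (HxN : xbar < N) by (unfold N; lia).
  clearbody N.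
  set (psi := phi ++ map (fun i => tmls T (true, AIn (N + i) xbar)) (seq 0 (S k))).
  set (E := flat_map (fun j => map (fun i => (N + i, N + j)) (seq 0 j)) (seq 0 (S k))).
  assert (HE : forall i j, i < j <= k -> In (N + i, N + j) E).
  { intros i j Hij. unfold E. apply in_flat_map. exists j. split.
    - apply in_seq. lia.
    - apply in_map_iff. exists i. split; auto. apply in_seq. lia. }
  assert (HE' : forall e, In e E -> exists i j, i < j <= k /\ e = (N + i, N + j)).
  { intros e He. unfold E in He. apply in_flat_map in He as [j [Hj He]].
    apply in_map_iff in He as [i [He Hi]]. apply in_seq in Hj. apply in_seq in Hi.
    exists i, j. split; [lia | symmetry; auto]. }
  destruct (Hconv psi E) as [e [He Hall]].
  - intro H0. assert (In (N + 0, N + 1) E) by (apply HE; lia). rewrite H0 in H. inversion H.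
  - intros s Hs.
    assert (Hphi : sat_conj T s phi).
    { intros l Hl. apply Hs. unfold psi. apply in_or_app. auto. }
    assert (Hy : forall i, i <= k -> mem (s (N + i)) (s xbar)).
    { intros i Hi. assert (H := Hs (tmls T (true, AIn (N + i) xbar))).
      apply (tmls_sat T s (true, AIn (N + i) xbar)). apply H.
      unfold psi. apply in_or_app. right. apply in_map_iff. exists i. split; auto.
      apply in_seq. lia. }
    destruct (Hle s Hphi) as [l [Hl Hin]].
    apply NNPP. intro Hno.
    assert (Hnd2 : NoDup (map (fun i => s (N + i)) (seq 0 (S k)))).
    { apply NoDup_map_NoDup_ForallPairs; [| apply seq_NoDup].
      intros x y Hx Hy' Heq. apply in_seq in Hx. apply in_seq in Hy'.
      destruct (lt_eq_lt_dec x y) as [[Hxy|Hxy]|Hxy]; auto; exfalso; apply Hno.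
      + exists (N + x, N + y). split; [apply HE; lia | exact Heq].
      + exists (N + y, N + x). split; [apply HE; lia | symmetry; exact Heq]. }
    assert (Hinc : incl (map (fun i => s (N + i)) (seq 0 (S k))) l).
    { intros a Ha. apply in_map_iff in Ha as [i [<- Hi]]. apply in_seq in Hi.
      apply Hin. apply Hy. lia. }
    assert (H := NoDup_incl_length Hnd2 Hinc). rewrite length_map, length_seq in H. lia.
  - destruct (HE' e He) as [i [j [Hij ->]]].
    destruct l0 as [|a [|b rest]]; simpl in Hlen; try lia.
    set (s' := fun v => if v <? N then s0 v else if v - N =? j then b else a).
    assert (Hloc : forall v, v < N -> s' v = s0 v).
    { intros v Hv. unfold s'. apply Nat.ltb_lt in Hv. rewrite Hv. auto. }
    assert (Hsat : sat_conj T s' psi).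
    { intros l Hl. unfold psi in Hl. apply in_app_or in Hl as [Hl|Hl].
      - apply (tsat_local T s' s0 l).
        + intros v Hv. apply Hloc. eauto.
        + apply Hs0; auto.
      - apply in_map_iff in Hl as [m [<- Hm]].
        apply (tmls_sat T s' (true, AIn (N + m) xbar)). unfold mls_lit_sat, mls_atom_sat. simpl.
        rewrite (Hloc xbar HxN). apply Hmem.
        unfold s'. assert (N + m <? N = false) by (apply Nat.ltb_ge; lia).
        rewrite H. replace (N + m - N) with m by lia.
        destruct (m =? j); simpl; auto. }
    assert (Heq := Hall s' Hsat). simpl in Heq. unfold s' in Heq.
    assert (N + i <? N = false) by (apply Nat.ltb_ge; lia). rewrite H in Heq.
    assert (N + j <? N = false) by (apply Nat.ltb_ge; lia). rewrite H0 in Heq.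
    replace (N + i - N) with i in Heq by lia. replace (N + j - N) with j in Heq by lia.
    rewrite Nat.eqb_refl in Heq.
    assert (i =? j = false) by (apply Nat.eqb_neq; lia). rewrite H1 in Heq.
    inversion Hnd. apply H4. subst. left; reflexivity.
Qed.
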